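(* For every integer $n\ge0$ and every sequence $s\neq(0)$ of non-negative integers with finitely many nonzero terms, setting $\alpha=[s]$, $$B^n_s=\sum_{J=(j_1,\dots,j_\alpha)\in\mathcal A^0_s}\ \sum_{1\le l_1<l_2<\dots<l_{\alpha-1}<l_\alpha:=n}\ \{l_1\}\prod_{a=2}^{\alpha}\{s^J_{a-1},l_a,j_a\},$$ i.e. in nested form $B^n_s=\sum_{J\in\mathcal A^0_s}\{s^J_{\alpha-1},n,j_\alpha\}\sum_{l_{\alpha-1}=\alpha-1}^{n-1}\{s^J_{\alpha-2},l_{\alpha-1},j_{\alpha-1}\}\cdots\sum_{l_2=2}^{l_3-1}\{s^J_1,l_2,j_2\}\sum_{l_1=1}^{l_2-1}\{l_1\}$ (for $\alpha=1$ the summand is just $\{s^J_0,n,j_1\}$).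
   Context: Fix real numbers $\tilde c_0,A_1,w$ and set $\tilde c_j=\tilde c_0-jA_1$ for all integers $j$. Sequences $s=(s_0,s_1,\dots)$ are integer sequences with finitely many nonzero terms; $(0)$ is the zero sequence; $|s|=\sum_i s_i$, $[s]=\sum_i s_i(i+1)$; $\sigma_0=(1,0,0,\dots)$, and for $i\ge1$, $\sigma_i$ has $-1$ at position $i-1$, $+1$ at position $i$, $0$ elsewhere. For $n\ge0$ and $s$ with non-negative entries, $B^n_s$ is defined by induction on $n+[s]$: $B^0_{(0)}=1$, and otherwise $B^n_s=(1-\delta_{s_0,0})(n+|s|-1)(\tilde c_{n+|s|-2}-w)\sum_{l=0}^{n-1}B^l_{s-\sigma_0}+\sum_{i\ge1}(1-\delta_{s_i,0})(s_{i-1}+1)\sum_{l=0}^{n-1}B^l_{s-\sigma_i}$ (empty sums vanish). For an integer $n$, $\{n\}=n(\tilde c_{n-1}-w)$; for a sequence $s$ and integers $l,a$, $\{s,l,a\}=\{l+|s|\}$ if $a=0$ and $\{s,l,a\}=s_{a-1}$ if $a\neq0$. $\mathcal A$ is the set of finite sequences $J=(j_1,\dots,j_\alpha)$ of non-negative integers with $j_1=0$, $|J|=\alpha$; $s^J_a=\sum_{a'=1}^a\sigma_{j_{a'}}$ ($s^J_0=(0)$), $s^J=s^J_{|J|}$. $\mathcal A^0\subset\mathcal A$ consists of those $J$ for which all entries of all $s^J_a$, $1\le a\le|J|$, are non-negative; $\mathcal A^0_s=\{J\in\mathcal A^0:s^J=s\}$ (such $J$ have $|J|=[s]$). *)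

(* Defs.v *)
From HB Require Import structures.
From mathcomp Require Import all_boot all_order all_algebra.
From mathcomp Require Import boolp classical_sets fsbigop reals.
Set Implicit Arguments. Unset Strict Implicit. Unset Printing Implicit Defensive.
Import Order.TTheory GRing.Theory Num.Theory.
Local Open Scope classical_set_scope.
Local Open Scope ring_scope.

(* Integer sequences with finitely many nonzero terms are represented by
   finite lists [seq int] (resp. [seq nat] when entries are non-negative),
   with implicit trailing zeros: the i-th term is [nth 0 s i]. *)

Definition sadd (s t : seq int) : seq int :=
  mkseq (fun k => nth 0 s k + nth 0 t k) (maxn (size s) (size t)).

Definition sigma (i : nat) : seq int :=
  if i is i'.+1 then rcons (nseq i' 0) (-1) ++ [:: 1] else [:: 1].

Definition abs_s (s : seq int) : int := \sum_(x <- s) x.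

Definition weight (s : seq nat) : nat := (\sum_(i < size s) nth 0 s i * i.+1)%N.

(* s^J_a = sum_{a'=1}^a sigma_{j_a'}, where J = [:: j_1; ...; j_alpha] *)
Definition sJ (J : seq nat) (a : nat) : seq int :=
  foldr sadd [::] (map sigma (take a J)).

Definition inA (J : seq nat) : Prop := (0 < size J)%N /\ nth 0 J 0 = 0%N.

Definition inA0 (J : seq nat) : Prop :=
  inA J /\ forall a, (1 <= a <= size J)%N -> forall k, 0 <= nth 0 (sJ J a) k.

Definition A0s (s : seq nat) : set (seq nat) :=
  [set J | inA0 J /\ forall k, nth 0 (sJ J (size J)) k = (nth 0%N s k)%:Z].

Section Coefs.
Variables (R : realType) (c0 A1 w : R).

Definition ct (j : int) : R := c0 - j%:~R * A1.

Definition brace1 (n : int) : R := n%:~R * (ct (n - 1) - w).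

Definition brace3 (s : seq int) (l : int) (a : nat) : R :=
  if a == 0%N then brace1 (l + abs_s s) else (nth 0 s a.-1)%:~R.

Definition sub_sigma0 (s : seq nat) : seq nat := set_nth 0%N s 0 (nth 0%N s 0 - 1)%N.
Definition sub_sigma (s : seq nat) (i : nat) : seq nat :=
  set_nth 0%N (set_nth 0%N s i (nth 0%N s i - 1)%N) i.-1 (nth 0%N s i.-1 + 1)%N.

(* B^n_s, by recursion with fuel k; each recursive call lowers [s] by 1,
   so fuel [s] suffices (see B below). *)
Fixpoint Bf (k n : nat) (s : seq nat) : R :=
  if (n == 0%N) && all (fun x => x == 0%N) s then 1 else
  match k with
  | 0%N => 0
  | k'.+1 =>
      (nth 0%N s 0 != 0%N)%:R * ((n + sumn s)%:Z - 1)%:~R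
        * (ct ((n + sumn s)%:Z - 2) - w)
        * \sum_(l < n) Bf k' l (sub_sigma0 s)
      + \sum_(1 <= i < size s)
          (nth 0%N s i != 0%N)%:R * (nth 0%N s i.-1 + 1)%:R
            * \sum_(l < n) Bf k' l (sub_sigma s i)
  end.

Definition B (n : nat) (s : seq nat) : R := Bf (weight s) n s.

End Coefs.

Definition Lset (alpha n : nat) : set (seq nat) :=
  [set L | size L = alpha /\ sorted ltn L /\ (1 <= nth 0%N L 0)%N
           /\ nth 0%N L alpha.-1 = n].

(* Main.v *)
Require Import Defs.
From HB Require Import structures.
From mathcomp Require Import all_boot all_order all_algebra.
From mathcomp Require Import boolp classical_sets fsbigop reals.
From mathcomp Require Import zify ring lra.
Import Order.TTheory GRing.Theory Num.Theory.
Local Open Scope classical_set_scope.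
Local Open Scope ring_scope.
Set Implicit Arguments. Unset Strict Implicit. Unset Printing Implicit Defensive.
Definition sv (i k : nat) : int := nth 0 (sigma i) k.
Definition sT (J : seq nat) : seq int := foldr sadd [::] (map sigma J).
Definition subs (s : seq nat) (i : nat) : seq nat :=
  if i is 0%N then sub_sigma0 s else sub_sigma s i.
Definition allz (s : seq nat) := all (fun x => x == 0%N) s.

Lemma nth_sadd s t k : nth 0 (sadd s t) k = nth 0 s k + nth 0 t k.
Proof.
rewrite /sadd; case: (ltnP k (maxn (size s) (size t))) => h.
  by rewrite nth_mkseq.
rewrite nth_default ?size_mkseq // !nth_default ?addr0 //.
  by apply: leq_trans h; rewrite leq_maxr.
by apply: leq_trans h; rewrite leq_maxl.
Qed.

Lemma nth_sT J k : nth 0 (sT J) k = \sum_(x <- J) sv x k.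
Proof.
elim: J => [|x J IH]; first by rewrite big_nil /= nth_nil.
by rewrite big_cons /= nth_sadd IH.
Qed.

Lemma sT_rcons J i k : nth 0 (sT (rcons J i)) k = nth 0 (sT J) k + sv i k.
Proof. by rewrite !nth_sT -cats1 big_cat big_seq1. Qed.

Lemma svE i k : sv i k = (k == i)%:R - ((0 < i)%N && (k == i.-1))%:R.
Proof.
rewrite /sv /sigma; case: i => [|i] /=.
  by case: k => [|[|k]] //=; rewrite subr0.
rewrite nth_cat size_rcons size_nseq.
case: (ltngtP k i.+1) => h.
- rewrite nth_rcons size_nseq; case: (ltngtP k i) => h2.
  + by rewrite nth_nseq h2 /= subr0.
  + lia.
  + by subst k; rewrite /= sub0r.
- have -> : (k - i.+1)%N = (k - i.+1).-1.+1 by lia.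
  by rewrite /= nth_nil (gtn_eqF (ltnW h)) /= subr0.
- by rewrite h subnn /= (gtn_eqF (ltnSn i)) subr0.
Qed.

Lemma allz_nth s k : allz s -> nth 0%N s k = 0%N.
Proof.
move=> h; case: (ltnP k (size s)) => hk; last by rewrite nth_default.
by apply/eqP; apply: (all_nthP 0%N h).
Qed.

Lemma nth_allz s : (forall k, nth 0%N s k = 0%N) -> allz s.
Proof. by move=> h; apply/(all_nthP 0%N) => k _; rewrite h. Qed.

Lemma subsE s i k : nth 0%N s i != 0%N ->
  (nth 0%N (subs s i) k)%:Z = (nth 0%N s k)%:Z - sv i k.
Proof.
move=> hi; rewrite svE; case: i hi => [|i] hi /=.
  rewrite /sub_sigma0 nth_set_nth /=; case: eqP => [->|_]; last by rewrite subr0.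
  rewrite subr0 /=; move: hi; case: (nth 0%N s 0) => // m _; rewrite subn1 /=; lia.
rewrite /sub_sigma nth_set_nth /= nth_set_nth /=.
case: (eqVneq k i) => [->|hk].
  rewrite (ltn_eqF (ltnSn i)) /= sub0r opprK PoszD; lia.
case: (eqVneq k i.+1) => [->|hk2] /=; last by rewrite !subr0.
move: hi; case: (nth 0%N s i.+1) => // m _; rewrite subn1 /= subr0; lia.
Qed.

Lemma Posz_sum I (r : seq I) (F : I -> nat) :
  (\sum_(i <- r) F i)%:Z = \sum_(i <- r) (F i)%:Z.
Proof. exact: (big_morph Posz PoszD (erefl _)). Qed.

Lemma sum_if (V : nmodType) N i (F : nat -> V) :
  \sum_(k < N) (if (k == i :> nat) then F k else 0) = if (i < N)%N then F i else 0.
Proof.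
elim: N => [|N IH]; first by rewrite big_ord0.
rewrite big_ord_recr /= IH ltnS.
case: (ltngtP i N) => h.
- by rewrite addr0.
- by rewrite addr0.
- by rewrite add0r h.
Qed.

Lemma big_widen0 (V : nmodType) n m (F : nat -> V) : (n <= m)%N ->
  (forall k, (n <= k)%N -> F k = 0) -> \sum_(k < n) F k = \sum_(k < m) F k.
Proof.
move=> hnm hF; rewrite (big_ord_widen m F hnm) big_mkcond; apply: eq_bigr => k _.
by case: ifP => // /negbT; rewrite -leqNgt => /hF ->.
Qed.

Lemma sum_sv_w N i : (i < N)%N -> \sum_(k < N) (k.+1)%:R * sv i k = 1 :> int.
Proof.
move=> hi.
transitivity (\sum_(k < N) (if (k == i :> nat) then (k.+1)%:R else 0)
   - \sum_(k < N) (if (k == i.-1 :> nat) then ((0 < i)%N * (k.+1))%:R else 0) : int).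
  rewrite -sumrB; apply: eq_bigr => k _; rewrite svE mulrBr.
  by case: eqP; case: eqP; case: (0 < i)%N => //= *; rewrite ?mulr1 ?mulr0 ?mul1n ?mul0n.
rewrite (@sum_if _ N i (fun k : nat => (k.+1)%:R : int)) (@sum_if _ N i.-1 (fun k : nat => ((0<i)%N * k.+1)%:R : int)) hi; have -> : (i.-1 < N)%N by lia.
case: i hi => [|i] hi /=; first by rewrite mul0n subr0.
rewrite mul1n; lia.
Qed.

Lemma sum_sv N i : (i < N)%N -> \sum_(k < N) sv i k = (i == 0%N)%:R.
Proof.
move=> hi.
transitivity (\sum_(k < N) (if (k == i :> nat) then 1 else 0)
   - \sum_(k < N) (if (k == i.-1 :> nat) then ((0 < i)%N)%:R else 0) : int).
  rewrite -sumrB; apply: eq_bigr => k _; rewrite svE.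
  by case: eqP; case: eqP; case: (0 < i)%N => //= *; rewrite ?subr0 ?sub0r.
rewrite (@sum_if _ N i (fun k : nat => 1 : int)) (@sum_if _ N i.-1 (fun k : nat => ((0<i)%N)%:R : int)) hi; have -> : (i.-1 < N)%N by lia.
by case: i hi => [|i] hi /=; rewrite ?subr0 ?subrr.
Qed.

Lemma weightZ s N : (size s <= N)%N ->
  (weight s)%:Z = \sum_(k < N) (nth 0%N s k)%:Z * (k.+1)%:R.
Proof.
move=> hN; rewrite /weight Posz_sum (@big_widen0 _ _ _ (fun k => (nth 0%N s k * k.+1)%:Z) hN).
  by apply: eq_bigr => k _; rewrite PoszM natz.
by move=> k hk; rewrite nth_default.
Qed.

Lemma size_subs s i : nth 0%N s i != 0%N -> size (subs s i) = size s.
Proof.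
move=> hi; have hs : (i < size s)%N.
  by rewrite ltnNge; apply: contra hi => h; rewrite nth_default.
case: i hi hs => [|i] hi hs /=; rewrite /sub_sigma0 /sub_sigma !size_set_nth; lia.
Qed.

Lemma weight_subs s i : nth 0%N s i != 0%N -> weight s = (weight (subs s i)).+1.
Proof.
move=> hi; have hs : (i < size s)%N.
  by rewrite ltnNge; apply: contra hi => h; rewrite nth_default.
apply/eqP; rewrite -(eqr_nat int) !natz -addn1 PoszD.
rewrite (weightZ (leqnn _)) (weightZ (N := size s)) ?size_subs //.
rewrite -(sum_sv_w hs) -big_split /=; apply/eqP/eq_bigr => k _.
by rewrite subsE // mulrBl mulrC [_ * sv _ _]mulrC subrK.
Qed.

Lemma weight0 s : weight s = 0%N -> allz s.
Proof.
move=> /eqP; rewrite /weight sum_nat_eq0 => /forallP h.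
apply/(all_nthP 0%N) => k hk; have := h (Ordinal hk); rewrite /= muln_eq0 orbF.
by [].
Qed.

Lemma allz_weight s : allz s -> weight s = 0%N.
Proof. by move=> h; rewrite /weight big1 // => k _; rewrite allz_nth. Qed.

Lemma sum_nthZ (t : seq int) N : (size t <= N)%N ->
  \sum_(x <- t) x = \sum_(k < N) nth 0 t k.
Proof.
move=> hN; rewrite (big_nth 0) big_mkord (@big_widen0 _ _ _ (fun k => nth 0 t k) hN) //.
by move=> k hk; rewrite nth_default.
Qed.

Lemma sumn_nthZ (t : seq nat) N : (size t <= N)%N ->
  (sumn t)%:Z = \sum_(k < N) (nth 0%N t k)%:Z.
Proof.
move=> hN; rewrite sumnE Posz_sum (big_nth 0%N) big_mkord (@big_widen0 _ _ _ (fun k => (nth 0%N t k)%:Z) hN) //.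
by move=> k hk; rewrite nth_default.
Qed.

Fixpoint Jen (k : nat) (s : seq nat) : seq (seq nat) :=
  if allz s then [:: [::]] else
  match k with
  | 0%N => [::]
  | k'.+1 => [seq rcons J' i | i <- [seq i <- iota 0 (size s) | nth 0%N s i != 0%N],
                               J' <- Jen k' (subs s i)]
  end.

Fixpoint Len (a n : nat) : seq (seq nat) :=
  match a with
  | 0%N => if n == 0%N then [:: [::]] else [::]
  | a'.+1 => [seq rcons L' n | l <- iota 0 n, L' <- Len a' l]
  end.

Lemma uniq_ap (S T U : eqType) (s : seq S) (t : S -> seq T) (f : S -> T -> U)
  (g : U -> S) : uniq s -> (forall x, x \in s -> uniq (t x)) ->
  (forall x, injective (f x)) ->
  (forall x y, x \in s -> y \in t x -> g (f x y) = x) ->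
  uniq [seq f x y | x <- s, y <- t x].
Proof.
elim: s => //= x s IH /andP[xs us] Ut If Hg.
rewrite cat_uniq; apply/and3P; split.
- by rewrite map_inj_uniq ?Ut ?inE ?eqxx.
- apply/hasPn => u /allpairsPdep [x' [y' [x's y't ->]]].
  apply/negP => /mapP [y yt E].
  have h1 := Hg x' y'; have h2 := Hg x y.
  rewrite !inE eqxx x's orbT /= in h1 h2.
  move: (h1 isT y't) (h2 isT yt); rewrite E => -> ex.
  by move: xs; rewrite -ex x's.
- apply: IH => //.
  + by move=> z zs; apply: Ut; rewrite inE zs orbT.
  + by move=> z y zs yt; apply: Hg; rewrite ?inE ?zs ?orbT.
Qed.

Lemma sT_nil k : nth 0 (sT [::]) k = 0.
Proof. by rewrite nth_sT big_nil. Qed.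

Lemma take_rcons_le (J : seq nat) i a : (a <= size J)%N ->
  take a (rcons J i) = take a J.
Proof. by move=> h; rewrite -cats1 takel_cat. Qed.

Lemma Jen_nil s J : allz s -> J \in [:: [::]] ->
  [/\ (J == [::]) = true, forall k', nth 0 (sT J) k' = (nth 0%N s k')%:Z,
      forall a k', 0 <= nth 0 (sT (take a J)) k' & (J != [::] -> nth 0%N J 0 = 0%N)].
Proof.
move=> hz; rewrite inE => /eqP ->; split => //.
- by move=> k'; rewrite sT_nil allz_nth.
- by move=> a k'; rewrite sT_nil.
Qed.

Lemma Jen_inv k s J : J \in Jen k s ->
  [/\ (J == [::]) = allz s, forall k', nth 0 (sT J) k' = (nth 0%N s k')%:Z,
      forall a k', 0 <= nth 0 (sT (take a J)) k' & (J != [::] -> nth 0%N J 0 = 0%N)].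
Proof.
elim: k s J => [|k IH] s J /=.
  by case hz: (allz s) => //; apply: Jen_nil.
case hz: (allz s); first by apply: Jen_nil.
move/allpairsPdep => [i [J' [hi hJ' ->]]].
rewrite mem_filter in hi; case/andP: hi => hi _.
have [e1 e2 e3 e4] := IH _ _ hJ'.
have e2' : forall k', nth 0 (sT (rcons J' i)) k' = (nth 0%N s k')%:Z.
  by move=> k'; rewrite sT_rcons e2 subsE // subrK.
split => //.
- by case: J' {e1 e2 e3 e4 hJ' e2'}.
- move=> a k'; case: (leqP a (size J')) => ha; first by rewrite take_rcons_le.
  by rewrite take_oversize ?size_rcons // e2'.
- move=> _; case: (eqVneq J' [::]) => [eJ|nJ].
    move: e1; rewrite eJ eqxx /= => /esym hz'.
    clear e2 e3 e2' hJ' e4.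
    case: i hi hz' => [|i] hi hz' //.
    have := subsE i hi; rewrite (allz_nth _ hz') svE /= (ltn_eqF (ltnSn i)) eqxx /=.
    lia.
  rewrite nth_rcons; case: J' nJ e4 {e1 e2 e3 hJ' e2'} => //= x J' _ e4.
  by apply: e4.
Qed.

Lemma Jen_size k s J : J \in Jen k s -> weight s = k -> size J = k.
Proof.
elim: k s J => [|k IH] s J /=.
  by case: ifP => hz //; rewrite inE => /eqP ->.
case hz: (allz s); first by rewrite allz_weight.
move/allpairsPdep => [i [J' [hi hJ' ->]]] hw.
rewrite mem_filter in hi; case/andP: hi => hi _.
rewrite size_rcons (IH _ _ hJ') //.
by move: hw; rewrite (weight_subs hi) => -[].
Qed.

Lemma Jen_uniq k s : uniq (Jen k s).
Proof.
elim: k s => [|k IH] s /=; first by case: ifP.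
case: ifP => // _.
apply: (@uniq_ap _ _ _ _ _ _ (last 0%N)).
- by rewrite filter_uniq // iota_uniq.
- by move=> x _; apply: IH.
- by move=> x; apply: rcons_injl.
- by move=> x y _ _; rewrite last_rcons.
Qed.

Lemma Len_mem a n L :
  (L \in Len a n) = [&& size L == a, path ltn 0%N L & last 0%N L == n].
Proof.
elim: a n L => [|a IH] n L /=.
  by case: L => [|x L]; case: n => [|n]; rewrite ?inE /=.
apply/allpairsPdep/idP.
  move=> [l [L' [hl hL' ->]]]; move: hL'; rewrite IH => /and3P [h1 h2 /eqP h3].
  rewrite size_rcons rcons_path last_rcons (eqP h1) h2 h3 eqxx /=.
  by move: hl; rewrite mem_iota add0n eqxx andbT.
case/lastP: L => [|L1 m] /=; first by [].
rewrite size_rcons rcons_path last_rcons eqSS => /and3P [h1 /andP [h2 h3] /eqP h4].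
exists (last 0%N L1), L1; split => //; last by rewrite h4.
  by rewrite mem_iota /= -h4.
by rewrite IH h1 h2 eqxx.
Qed.

Lemma Len_uniq a n : uniq (Len a n).
Proof.
elim: a n => [|a IH] n /=; first by case: ifP.
apply: (@uniq_ap _ _ _ _ _ _ (fun U : seq nat => last 0%N (take (size U).-1 U))).
- by rewrite iota_uniq.
- by move=> x _; apply: IH.
- by move=> x; apply: rcons_injl.
- move=> x y _; rewrite Len_mem => /and3P [_ _ /eqP <-].
  by rewrite size_rcons /= take_rcons_le // take_size.
Qed.

Lemma Jen_allz k s : allz s -> Jen k s = [:: [::]].
Proof. by case: k => [|k] /= ->. Qed.

Lemma nth_ne0_size s i : nth 0%N s i != 0%N -> (i < size s)%N.
Proof. by rewrite ltnNge; apply: contra => h; rewrite nth_default. Qed.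

Lemma ne0_allz s i : nth 0%N s i != 0%N -> allz s = false.
Proof. by move=> hi; apply/negP => /allz_nth h; rewrite h in hi. Qed.

Lemma Jen_A0s s J : ~~ allz s -> J \in Jen (weight s) s -> A0s s J.
Proof.
move=> hz hJ; have [e1 e2 e3 e4] := Jen_inv hJ.
have nJ : J != [::] by rewrite e1.
split; last by move=> k; rewrite /sJ take_size; apply: e2.
split; last by move=> a _ k; apply: e3.
split; last by apply: e4.
by case: J nJ {hJ e1 e2 e3 e4}.
Qed.

Lemma A0s_Jen J : forall s, A0s s J -> J \in Jen (weight s) s.
Proof.
elim/last_ind: J => [|J' i IH] s [[[hsz h0] hnn] hpt]; first by []; clear hsz.
have hpt' : forall k, nth 0 (sT (rcons J' i)) k = (nth 0%N s k)%:Z.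
  by move=> k; have := hpt k; rewrite /sJ take_size.
have hJ'k : forall k, nth 0 (sT J') k = (nth 0%N s k)%:Z - sv i k.
  by move=> k; rewrite -hpt' sT_rcons addrK.
have hnn' : forall k, 0 <= nth 0 (sT J') k.
  move=> k; case: (eqVneq J' [::]) => [->|nJ]; first by rewrite sT_nil.
  have := hnn (size J'); rewrite size_rcons leqnSn andbT.
  have -> : (0 < size J')%N by rewrite lt0n size_eq0.
  by move=> /(_ isT k); rewrite /sJ take_rcons_le // take_size.
have hi : nth 0%N s i != 0%N.
  have := hnn' i; rewrite hJ'k svE eqxx.
  case: i {IH h0 hnn hpt hpt' hJ'k hnn'} => [|i] /=.
    by rewrite subr0; case: (nth 0%N s 0).
  rewrite (gtn_eqF (ltnSn i)) /= subr0; case: (nth 0%N s i.+1) => //.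
have hsub : forall k, (nth 0%N (subs s i) k)%:Z = nth 0 (sT J') k.
  by move=> k; rewrite subsE // hJ'k.
rewrite (weight_subs hi) /= (ne0_allz hi).
apply/allpairsPdep; exists i, J'; split => //.
  by rewrite mem_filter hi mem_iota /= add0n nth_ne0_size.
case: (eqVneq J' [::]) => [eJ|nJ].
  rewrite Jen_allz ?eJ ?inE //; apply: nth_allz => k.
  by apply/eqP; rewrite -(eqr_nat int) natz hsub eJ sT_nil.
apply: IH; split; last by move=> k; rewrite /sJ take_size hsub.
split.
  split; first by case: J' nJ {h0 hnn hpt hpt' hJ'k hnn' hsub}.
  by move: h0; rewrite nth_rcons; case: J' nJ {hnn hpt hpt' hJ'k hnn' hsub}.
move=> a /andP [ha1 ha2] k.
have := hnn a; rewrite size_rcons ha1 (leq_trans ha2 (leqnSn _)) => /(_ isT k).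
by rewrite /sJ take_rcons_le.
Qed.

Section Main.
Variables (R : realType) (c0 A1 w : R).

Fixpoint Fr (rJ : seq nat) (n : nat) : R :=
  match rJ with
  | [::] => (n == 0%N)%:R
  | i :: rJ' => brace3 c0 A1 w (sT (rev rJ')) n%:Z i * \sum_(l < n) Fr rJ' l
  end.
Definition F J n := Fr (rev J) n.

Lemma F_rcons J i n :
  F (rcons J i) n = brace3 c0 A1 w (sT J) n%:Z i * \sum_(l < n) F J l.
Proof. by rewrite /F rev_rcons /= revK. Qed.

Fixpoint Qr (rJ rL : seq nat) : R :=
  match rJ, rL with
  | i :: rJ', m :: rL' => brace3 c0 A1 w (sT (rev rJ')) m%:Z i * Qr rJ' rL'
  | _, _ => 1
  end.
Definition Q J L := Qr (rev J) (rev L).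

Lemma Q_rcons J i L m :
  Q (rcons J i) (rcons L m) = brace3 c0 A1 w (sT J) m%:Z i * Q J L.
Proof. by rewrite /Q !rev_rcons /= revK. Qed.

Lemma FL J n : F J n = \sum_(L <- Len (size J) n) Q J L.
Proof.
elim/last_ind: J n => [|J i IH] n.
  by case: n => [|n]; rewrite /F /= ?big_seq1 ?big_nil.
rewrite F_rcons size_rcons /= big_allpairs_dep /=.
rewrite -(big_mkord xpredT) /index_iota subn0 mulr_sumr; apply: eq_bigr => l _.
by rewrite IH mulr_sumr; apply: eq_bigr => L _; rewrite Q_rcons.
Qed.


Lemma QP J L : (0 < size J)%N -> size L = size J -> nth 0%N J 0 = 0%N ->
  brace1 c0 A1 w (nth 0%N L 0)%:Z
   * \prod_(2 <= a < (size J).+1)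
       brace3 c0 A1 w (sJ J a.-1) (nth 0%N L a.-1)%:Z (nth 0%N J a.-1) = Q J L.
Proof.
elim/last_ind: J L => [|J i IH] L //= _.
case/lastP: L => [|L m]; first by rewrite size_rcons.
rewrite !size_rcons => /eqP; rewrite eqSS => /eqP hs h0.
case: (eqVneq J [::]) => [eJ|nJ].
  subst J; move: hs => /= /size0nil ->; move: h0 => /= ->.
  rewrite big_geq // mulr1 /Q /= mulr1 /brace3 /= /abs_s big_nil addr0.
  by [].
have hJ : (0 < size J)%N by rewrite lt0n size_eq0.
have h0' : nth 0%N J 0 = 0%N by move: h0; rewrite nth_rcons hJ.
rewrite big_nat_recr /=; last by rewrite ltnS.
rewrite Q_rcons -(IH L hJ hs h0') nth_rcons hs hJ.
rewrite /sJ take_rcons_le // take_size nth_rcons hs ltnn eqxx nth_rcons ltnn eqxx.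
rewrite (@eq_big_nat _ _ _ 2 (size J).+1 _
   (fun a => brace3 c0 A1 w (sJ J a.-1) (nth 0%N L a.-1)%:Z (nth 0%N J a.-1))).
  by rewrite mulrA [RHS]mulrC.
move=> a /andP [ha1 ha2]; have ha : (a.-1 < size J)%N by lia.
by rewrite /sJ take_rcons_le ?(ltnW ha) // !nth_rcons hs ha.
Qed.

Definition C (s : seq nat) (n i : nat) : R :=
  if i is i'.+1 then (nth 0%N s i' + 1)%:R
  else ((n + sumn s)%:Z - 1)%:~R * (ct c0 A1 ((n + sumn s)%:Z - 2) - w).

Lemma brace3_C s i J' n : nth 0%N s i != 0%N ->
  (forall k, nth 0 (sT J') k = (nth 0%N (subs s i) k)%:Z) ->
  brace3 c0 A1 w (sT J') n%:Z i = C s n i.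
Proof.
move=> hi hJ; case: i hi hJ => [|i] hi hJ.
  have hs : (0 < size s)%N := nth_ne0_size hi.
  set N := maxn (size (sT J')) (size s).
  rewrite /brace3 /= /brace1 /C.
  have -> : abs_s (sT J') = (sumn s)%:Z - 1.
    rewrite /abs_s (@sum_nthZ _ N) ?leq_maxl //.
    under eq_bigr do rewrite hJ subsE //.
    rewrite sumrB sum_sv; last by apply: leq_trans hs (leq_maxr _ _).
    by rewrite (@sumn_nthZ _ N) ?leq_maxr.
  have e1 : n%:Z + ((sumn s)%:Z - 1) = (n + sumn s)%:Z - 1 by lia.
  have e2 : (n + sumn s)%:Z - 1 - 1 = (n + sumn s)%:Z - 2 by lia.
  by rewrite e1 e2.
rewrite /brace3 /= hJ subsE // svE /= (ltn_eqF (ltnSn i)) eqxx /= sub0r opprK.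
by rewrite -PoszD.
Qed.

Lemma BJ k : forall s n, weight s = k ->
  Bf c0 A1 w k n s = \sum_(J <- Jen k s) F J n.
Proof.
elim: k => [|k IH] s n hw.
  have hz := weight0 hw.
  have hz' : all (fun x => x == 0%N) s = true := hz.
  rewrite Jen_allz // big_seq1 /F /= hz' andbT.
  by case: n.
have hz : allz s = false.
  by apply/negP => /allz_weight; rewrite hw.
have hz' : all (fun x => x == 0%N) s = false := hz.
have hs : (0 < size s)%N by case: s hz {hw hz'}.
transitivity (\sum_(i <- iota 0 (size s))
   (nth 0%N s i != 0%N)%:R * C s n i * \sum_(l < n) Bf c0 A1 w k l (subs s i)).
  rewrite /= hz' andbF.
  have -> : iota 0 (size s) = 0%N :: iota 1 (size s).-1 by case: (size s) hs.
  rewrite big_cons; congr (_ + _); first by rewrite /C !mulrA.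
  rewrite /index_iota subn1; apply: eq_big_seq => i; rewrite mem_iota.
  by case: i => [|i].
rewrite /= hz big_allpairs_dep big_filter big_mkcond; apply: eq_bigr => i _.
case: (eqVneq (nth 0%N s i) 0%N) => hi /=; first by rewrite !mul0r.
rewrite mul1r.
transitivity (\sum_(J' <- Jen k (subs s i)) C s n i * \sum_(l < n) F J' l).
  rewrite -mulr_sumr; congr (_ * _); rewrite exchange_big /=; apply: eq_bigr => l _.
  apply: IH; move: hw; rewrite (weight_subs hi); lia.
apply: eq_big_seq => J' hJ'; rewrite F_rcons (brace3_C _ hi) //.
by have [_ e2 _ _] := Jen_inv hJ'.
Qed.

End Main.

Lemma Lset_Len a n L : (0 < a)%N -> Lset a n L <-> L \in Len a n.
Proof.
move=> ha; rewrite Len_mem; case: L => [|x L] /=.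
  by split => [[h _]|/andP [/eqP h _]]; rewrite -h in ha.
have hl : nth 0%N (x :: L) (size L) = last x L := nth_last 0%N (x :: L).
split.
  move=> [/= h1 [h2 [h3 h4]]]; subst a; rewrite /= in h4.
  by rewrite eqxx h3 h2 /= -hl h4.
move=> /and3P [/eqP h1 /andP [h2 h3] /eqP h4]; split => //; split => //.
split => //; rewrite -h1 /=; by rewrite hl.
Qed.

Theorem mainTheorem7 (R : realType) (c0 A1 w : R) (n : nat) (s : seq nat) :
  has (fun x => x != 0%N) s ->
  B c0 A1 w n s =
  \sum_(J \in A0s s) \sum_(L \in Lset (weight s) n)
     (brace1 c0 A1 w (nth 0%N L 0)%:Z
      * \prod_(2 <= a < (weight s).+1)
          brace3 c0 A1 w (sJ J a.-1) (nth 0%N L a.-1)%:Z (nth 0%N J a.-1)).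
Proof.
move=> hs.
have hz : ~~ allz s.
  apply/negP => h; move/hasP: hs => [x xs hx].
  by move: (allP h x xs); rewrite (negbTE hx).
have hw : (0 < weight s)%N.
  by rewrite lt0n; apply/negP => /eqP /weight0 h; rewrite h in hz.
rewrite /B (@BJ _ c0 A1 w (weight s) s n (erefl _)).
rewrite (fsbig_fwiden (Jen (weight s) s)).
- apply: eq_big_seq => J hJ.
  have [e1 _ _ e4] := Jen_inv hJ.
  have hsz := Jen_size hJ (erefl _).
  have nJ : J != [::] by rewrite e1.
  rewrite FL hsz (fsbig_fwiden (Len (weight s) n)).
  + apply: eq_big_seq => L hL; move: hL; rewrite Len_mem => /and3P [/eqP hL _ _].
    symmetry; rewrite -hsz; apply: QP.
    * by rewrite hsz.
    * by rewrite hL hsz.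
    * by apply: e4.
  + by move=> L /(Lset_Len _ _ hw).
  + exact: Len_uniq.
  + by move=> L [/= hL nL]; exfalso; apply: nL; apply/(Lset_Len _ _ hw).
- by move=> J hJ; apply: A0s_Jen.
- exact: Jen_uniq.
- by move=> J [/= hJ nJ]; exfalso; apply: nJ; apply: Jen_A0s.
Qed.
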